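(* Let $S=(|S|,\preccurlyeq,E)$, where $|S|$ is a finite set, $\preccurlyeq$ is a partial ordering on $|S|$, and $E$ is a set of unordered pairs of distinct elements of $|S|$. Let $c$ be the number of connected components of the Hasse diagram of the poset $(|S|,\preccurlyeq)$. For each integer $n\ge 0$ let $C(S,n)$ be the number of maps $\varphi:|S|\to\{1,\dots,n\}$ that are isotone (i.e. $x\preccurlyeq y\Rightarrow \varphi(x)\le\varphi(y)$) and satisfy $\varphi(x)\neq\varphi(y)$ whenever $\{x,y\}\in E$. Then there is a polynomial $f\in\mathbb{Q}[t]$ with $C(S,n)=f(n)$ for all integers $n\ge 0$, and every prime dividing the denominator of a coefficient of $f$ (written in lowest terms) is $\le \mathrm{card}(|S|)-c+1$.
   Context: The Hasse diagram of a finite poset is the graph on its elements in which $x,y$ are adjacent iff one covers the other ($y$ covers $x$ means $x\preccurlyeq y$, $x\ne y$, and there is no $z$ distinct from both with $x\preccurlyeq z\preccurlyeq y$). *)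

(* Defs.v *)
From HB Require Import structures.
From mathcomp Require Import all_boot all_order all_algebra.
Set Implicit Arguments. Unset Strict Implicit. Unset Printing Implicit Defensive.

Definition is_partial_order (T : finType) (le : rel T) : Prop :=
  [/\ reflexive le, antisymmetric le & transitive le].

(* E : set of unordered pairs of distinct elements, as a symmetric irreflexive relation. *)
Definition is_simple_edge_rel (T : finType) (E : rel T) : Prop :=
  symmetric E /\ irreflexive E.

Definition covers (T : finType) (le : rel T) (x y : T) : bool :=
  [&& le x y, x != y & ~~ [exists z, [&& z != x, z != y, le x z & le z y]]].

Definition hasse (T : finType) (le : rel T) : rel T :=
  fun x y => covers le x y || covers le y x.

Definition hasse_ncomp (T : finType) (le : rel T) : nat :=
  n_comp (hasse le) T.

(* C(S,n): number of isotone maps |S| -> {1..n} (encoded as 'I_n = {0..n-1},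
   an order-preserving bijection) with phi x != phi y whenever {x,y} in E. *)
Definition C_count (T : finType) (le E : rel T) (n : nat) : nat :=
  #|[set phi : {ffun T -> 'I_n} |
      [forall x, forall y, le x y ==> (phi x <= phi y)%N] &&
      [forall x, forall y, E x y ==> (phi x != phi y)]]|.

(* Main.v *)
Require Import Defs.
From HB Require Import structures.
From mathcomp Require Import all_boot all_order all_algebra.
From mathcomp Require Import zify ring.
Set Implicit Arguments. Unset Strict Implicit. Unset Printing Implicit Defensive.
Import Order.TTheory GRing.Theory Num.Theory.

Local Open Scope ring_scope.

Definition smallp (B d : nat) := forall p, prime p -> (p %| d)%N -> (p <= B)%N.

Definition goodq (B : nat) (r : rat) :=
  exists d : nat, [/\ (0 < d)%N, smallp B d & exists z : int, d%:R * r = z%:~R].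

Definition goodp (B : nat) (f : {poly rat}) := forall i, goodq B f`_i.

Lemma smallpM B d1 d2 : smallp B d1 -> smallp B d2 -> smallp B (d1 * d2).
Proof. by move=> h1 h2 p pp; rewrite Euclid_dvdM // => /orP[/h1|/h2]; apply. Qed.

Lemma smallp_mono B B' d : (B <= B')%N -> smallp B d -> smallp B' d.
Proof. by move=> hB h p pp /(h p pp) /leq_trans; apply. Qed.

Lemma goodq_mono B B' r : (B <= B')%N -> goodq B r -> goodq B' r.
Proof. by move=> hB [d [d0 hs hz]]; exists d; split=> //; apply: smallp_mono hs. Qed.

Lemma goodq_int B (z : int) : goodq B z%:~R.
Proof. exists 1%N; split=> //; first by move=> p pp; rewrite dvdn1 => /eqP p1; rewrite p1 in pp.
by exists z; rewrite mul1r. Qed.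

Lemma goodqD B r s : goodq B r -> goodq B s -> goodq B (r + s).
Proof.
move=> [d1 [d10 h1 [z1 e1]]] [d2 [d20 h2 [z2 e2]]].
exists (d1 * d2)%N; split; first by rewrite muln_gt0 d10.
  exact: smallpM.
exists (z1 * d2%:Z + z2 * d1%:Z); rewrite natrM rmorphD /= !rmorphM /= -e1 -e2 /=.
rewrite !pmulrn; ring.
Qed.

Lemma goodqM B r s : goodq B r -> goodq B s -> goodq B (r * s).
Proof.
move=> [d1 [d10 h1 [z1 e1]]] [d2 [d20 h2 [z2 e2]]].
exists (d1 * d2)%N; split; first by rewrite muln_gt0 d10.
  exact: smallpM.
exists (z1 * z2); rewrite natrM rmorphM /= -e1 -e2; ring.
Qed.

Lemma goodqN B r : goodq B r -> goodq B (- r).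
Proof. move=> h; rewrite -mulN1r; apply: goodqM=> //; exact: (goodq_int B (-1)). Qed.

Lemma goodq_den B r : goodq B r -> forall p, prime p -> (p %| `|denq r|)%N -> (p <= B)%N.
Proof.
move=> [d [d0 hs [z e]]] p pp hp; apply: hs pp _; apply: dvdn_trans hp _.
have E : (d%:Z * numq r = z * denq r)%R.
  apply: (@intr_inj rat). rewrite !rmorphM /= numqE -e /=; rewrite pmulrn; ring.
have : (`|denq r| %| d * `|numq r|)%N.
  have -> : (d * `|numq r| = `|(z * denq r)%R|)%N by rewrite -E abszM.
  by rewrite abszM dvdn_mull.
by rewrite Gauss_dvdl // coprime_sym coprime_num_den.
Qed.


Lemma goodq_sum B (I : Type) (s : seq I) (P : pred I) (F : I -> rat) :
  (forall i, P i -> goodq B (F i)) -> goodq B (\sum_(i <- s | P i) F i).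
Proof.
move=> h; apply: big_ind => //; first exact: (goodq_int B 0).
exact: goodqD.
Qed.

Lemma goodp_mono B B' f : (B <= B')%N -> goodp B f -> goodp B' f.
Proof. by move=> hB h i; apply: goodq_mono (h i). Qed.

Lemma goodpC B c : goodq B c -> goodp B c%:P.
Proof. move=> h i; rewrite coefC; case: eqP => _ //; exact: (goodq_int B 0). Qed.

Lemma goodpX B : goodp B 'X.
Proof. move=> i; rewrite coefX; case: eqP => _; [exact: (goodq_int B 1)|exact: (goodq_int B 0)]. Qed.

Lemma goodpD B f g : goodp B f -> goodp B g -> goodp B (f + g).
Proof. by move=> hf hg i; rewrite coefD; apply: goodqD. Qed.

Lemma goodpN B f : goodp B f -> goodp B (- f).
Proof. by move=> hf i; rewrite coefN; apply: goodqN. Qed.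

Lemma goodpM B f g : goodp B f -> goodp B g -> goodp B (f * g).
Proof.
move=> hf hg i; rewrite coefM; apply: goodq_sum => j _; exact: goodqM.
Qed.

Lemma goodp_sum B (I : Type) (s : seq I) (P : pred I) (F : I -> {poly rat}) :
  (forall i, P i -> goodp B (F i)) -> goodp B (\sum_(i <- s | P i) F i).
Proof.
move=> h; apply: big_ind => //; first by apply: goodpC; exact: (goodq_int B 0).
exact: goodpD.
Qed.

Lemma goodp_natC B (n : nat) : goodp B (n%:R)%:P.
Proof. apply: goodpC; rewrite -[n%:R]/((n%:Z)%:~R); exact: goodq_int. Qed.

Lemma goodp_nat B (n : nat) : goodp B n%:R.
Proof. rewrite -polyC_natr; exact: goodp_natC. Qed.

Lemma goodq_inv (j : nat) : goodq j.+1 (j.+1%:R)^-1.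
Proof.
exists j.+1; split=> //; first by move=> p pp h; exact: dvdn_leq h.
by exists 1; rewrite mulfV // pnatr_eq0.
Qed.

Fixpoint binp (j : nat) : {poly rat} :=
  if j is j'.+1 then binp j' * (('X - j'%:R%:P) * ((j'.+1%:R)^-1)%:P) else 1.

Lemma binpE j (n : nat) : (binp j).[n%:R] = 'C(n, j)%:R.
Proof.
elim: j => [|j IH] /=; first by rewrite hornerC bin0.
rewrite hornerM IH hornerM hornerC hornerD hornerX hornerN hornerC.
apply: (@mulfI _ (j.+1%:R)); first by rewrite pnatr_eq0.
rewrite -natrM mul_bin_left.
have [lt|le] := ltnP n j.
  by rewrite bin_small // mul0r mulr0 muln0.
rewrite natrM natrB //; field; by rewrite (_ : 1 + j%:R = j.+1%:R) ?pnatr_eq0 // -addn1 natrD addrC.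
Qed.

Lemma goodp_binp j : goodp j (binp j).
Proof.
elim: j => [|j IH] /=; first exact: (goodp_nat 0 1).
apply: goodpM; first exact: goodp_mono IH.
apply: goodpM; first by apply: goodpD; [exact: goodpX| apply: goodpN; exact: goodp_natC].
by apply: goodpC; apply: goodq_inv.
Qed.


Local Close Scope ring_scope.

Lemma card_bij (A B : finType) (S1 : {set A}) (S2 : {set B}) (F : A -> B) (G : B -> A) :
  {in S1, forall a, F a \in S2} -> {in S2, forall b, G b \in S1} ->
  {in S1, cancel F G} -> {in S2, cancel G F} -> #|S1| = #|S2|.
Proof.
move=> hF hG hFG hGF; apply/eqP; rewrite eqn_leq; apply/andP; split.
  rewrite -(card_in_imset (f := F)); last by move=> x y hx hy e; rewrite -(hFG x hx) e hFG.
  by apply: subset_leq_card; apply/subsetP=> b /imsetP[a ha ->]; apply: hF.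
rewrite -(card_in_imset (f := G)); last by move=> x y hx hy e; rewrite -(hGF x hx) e hGF.
by apply: subset_leq_card; apply/subsetP=> b /imsetP[a ha ->]; apply: hG.
Qed.

Definition validK (T : finType) (K : nat) (A : {set T}) (R E : rel T) (n : nat)
  (phi : {ffun T -> 'I_K.+1}) : bool :=
  [&& [forall x, if x \in A then (phi x < n)%N else phi x == ord0],
      [forall x in A, forall y in A, R x y ==> (phi x <= phi y)%N] &
      [forall x in A, forall y in A, E x y ==> (phi x != phi y)]].

Definition cnt (T : finType) (K : nat) (A : {set T}) (R E : rel T) (n : nat) :=
  #|[set phi : {ffun T -> 'I_K.+1} | validK A R E n phi]|.

Lemma validP (T : finType) (K : nat) (A : {set T}) (R E : rel T) (n : nat) (phi : {ffun T -> 'I_K.+1}) :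
  reflect [/\ forall x, x \in A -> (phi x < n)%N, forall x, x \notin A -> phi x = ord0,
     forall x y, x \in A -> y \in A -> R x y -> (phi x <= phi y)%N &
     forall x y, x \in A -> y \in A -> E x y -> phi x != phi y]
   (validK A R E n phi).
Proof.
apply: (iffP and3P).
  move=> [/forallP h1 /forall_inP h2 /forall_inP h3]; split.
  - by move=> x xA; have := h1 x; rewrite xA.
  - by move=> x xA; have := h1 x; rewrite (negbTE xA) => /eqP.
  - by move=> x y xA yA; have /forall_inP/(_ y yA)/implyP := h2 x xA.
  - by move=> x y xA yA; have /forall_inP/(_ y yA)/implyP := h3 x xA.
move=> [h1 h2 h3 h4]; split.
- apply/forallP=> x; case: ifP => xA; first exact: h1.
  by rewrite h2 ?xA.
- by apply/forall_inP=> x xA; apply/forall_inP=> y yA; apply/implyP; apply: h3.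
- by apply/forall_inP=> x xA; apply/forall_inP=> y yA; apply/implyP; apply: h4.
Qed.

Lemma cnt0 (T : finType) (K : nat) (A : {set T}) (R E : rel T) :
  cnt K A R E 0 = (A == set0).
Proof.
rewrite /cnt; case: (set_0Vmem A) => [->|[a aA]] /=.
  rewrite eqxx; apply/eqP/cards1P; exists [ffun=> ord0]; apply/setP=> phi.
  rewrite !inE; apply/validP/eqP.
    by move=> [_ h _ _]; apply/ffunP=> x; rewrite ffunE h ?inE.
  by move=> ->; split=> // x; rewrite ?inE // ffunE.
have -> : (A == set0) = false by apply/negbTE/set0Pn; exists a.
apply/eqP; rewrite cards_eq0; apply/eqP/setP=> phi; rewrite !inE.
by apply/negbTE/negP=> /validP[h _ _ _]; have := h a aA.
Qed.


Definition upclosed (T : finType) (A : {set T}) (R : rel T) (U : {set T}) :=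
  (U \subset A) && [forall u in U, forall v in A, R u v ==> (v \in U)].
Definition rel0 (T : finType) : rel T := fun _ _ => false.

Lemma cnt_rec (T : finType) (K : nat) (A : {set T}) (R : rel T) (n : nat) :
  (n.+1 <= K)%N ->
  cnt K A R (@rel0 T) n.+1 = \sum_(U | upclosed A R U) cnt K (A :\: U) R (@rel0 T) n.
Proof.
move=> nK.
set S := [set phi : {ffun T -> 'I_K.+1} | validK A R (@rel0 T) n.+1 phi].
pose lv (phi : {ffun T -> 'I_K.+1}) := [set z in A | nat_of_ord (phi z) == n].
rewrite /cnt -/S -sum1_card (partition_big lv (upclosed A R)); last first.
  move=> phi; rewrite inE => /validP[h1 h2 h3 h4]; apply/andP; split.
    by apply/subsetP=> z; rewrite inE => /andP[].
  apply/forall_inP=> u; rewrite inE => /andP[uA /eqP un]; apply/forall_inP=> v vA.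
  apply/implyP=> Ruv; rewrite inE vA /=; have := h3 _ _ uA vA Ruv; have := h1 _ vA.
  by rewrite un; lia.
apply: eq_bigr => U /andP[UA /forall_inP Uup].
transitivity (#|[set phi | (phi \in S) && (lv phi == U)]|).
  by rewrite -sum1_card; apply: eq_bigl => phi; rewrite inE.
have nK' : (n < K.+1)%N by lia.
pose F (phi : {ffun T -> 'I_K.+1}) : {ffun T -> 'I_K.+1} :=
  [ffun z => if z \in U then ord0 else phi z].
pose G (psi : {ffun T -> 'I_K.+1}) : {ffun T -> 'I_K.+1} :=
  [ffun z => if z \in U then Ordinal nK' else psi z].
apply: (card_bij (F := F) (G := G)).
- move=> phi; rewrite !inE => /andP[/validP[h1 h2 h3 h4] /eqP lvU].
  have inU z : (z \in U) = (z \in A) && (nat_of_ord (phi z) == n) by rewrite -lvU inE.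
  apply/validP; split.
  + move=> x; rewrite !inE ffunE => /andP[xU xA]; rewrite (negbTE xU).
    have := h1 _ xA; move: xU; rewrite inU xA /=; lia.
  + move=> x; rewrite !inE ffunE negb_and negbK => /orP[->//|xA].
    by rewrite inU (negbTE xA) /= h2.
  + move=> x y; rewrite !inE !ffunE => /andP[xU xA] /andP[yU yA] Rxy.
    by rewrite (negbTE xU) (negbTE yU); apply: h3.
  + by [].
- move=> psi; rewrite !inE => /validP[h1 h2 h3 h4]; apply/andP; split.
    apply/validP; split.
    + move=> x xA; rewrite ffunE; case: ifP => xU //=.
      have : x \in A :\: U by rewrite inE xU xA.
      by move/h1; lia.
    + move=> x xA; rewrite ffunE; case: ifP => xU; first by move: (subsetP UA x xU); rewrite (negbTE xA).
      by apply: h2; rewrite inE xU.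
    + move=> x y xA yA Rxy; rewrite !ffunE.
      case: ifP => xU; case: ifP => yU //=.
      * by have := Uup x xU; move/forall_inP/(_ y yA)/implyP/(_ Rxy); rewrite yU.
      * have : x \in A :\: U by rewrite inE xU xA.
        by move/h1; lia.
      * by apply: h3 => //; rewrite inE ?xU ?yU ?xA ?yA.
    + by [].
  apply/eqP/setP=> z; rewrite inE ffunE; case: ifP => zU /=.
    by rewrite eqxx andbT; apply: (subsetP UA).
  case zA: (z \in A) => //=.
  have : z \in A :\: U by rewrite inE zU zA.
  by move/h1; lia.
- move=> phi; rewrite !inE => /andP[_ /eqP lvU]; apply/ffunP=> z; rewrite !ffunE.
  case zU: (z \in U) => //; apply: val_inj => /=.
  by move: zU; rewrite -lvU inE => /andP[_ /eqP].
- move=> psi; rewrite !inE => /validP[h1 h2 h3 h4]; apply/ffunP=> z; rewrite !ffunE.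
  case zU: (z \in U) => //; by rewrite h2 // inE zU.
Qed.


Definition Qexp (N : nat) (G : nat -> nat -> nat) :=
  exists a : nat -> nat, forall K n, n <= K -> G K n = \sum_(j < N) a j * 'C(n, j).

Lemma Qexp_ext N G1 G2 : (forall K n, n <= K -> G1 K n = G2 K n) -> Qexp N G2 -> Qexp N G1.
Proof. by move=> e [a ha]; exists a => K n nK; rewrite e // ha. Qed.

Lemma Qexp_mono N N' G : N <= N' -> Qexp N G -> Qexp N' G.
Proof.
move=> NN [a ha]; exists (fun j => if j < N then a j else 0) => K n nK.
rewrite ha // (big_ord_widen N' (fun j => a j * 'C(n, j))) // big_mkcond /=.
by apply: eq_bigr => j _; case: ifP.
Qed.

Lemma Qexp_add N G1 G2 : Qexp N G1 -> Qexp N G2 -> Qexp N (fun K n => G1 K n + G2 K n).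
Proof.
move=> [a ha] [b hb]; exists (fun j => a j + b j) => K n nK.
by rewrite ha // hb // -big_split /=; apply: eq_bigr => j _; rewrite mulnDl.
Qed.

Lemma Qexp_const c : Qexp 1 (fun _ _ => c).
Proof. by exists (fun _ => c) => K n _; rewrite big_ord1 bin0 muln1. Qed.

Lemma Qexp_bigsum N (I : Type) (s : seq I) (P : pred I) (G : I -> nat -> nat -> nat) :
  (forall i, P i -> Qexp N (G i)) -> Qexp N (fun K n => \sum_(i <- s | P i) G i K n).
Proof.
move=> h; elim: s => [|i s IH].
  by exists (fun _ => 0) => K n _; rewrite big_nil big1.
case Pi: (P i).
  apply: Qexp_ext; first by move=> K n _; rewrite big_cons Pi.
  by apply: Qexp_add => //; apply: h.
by apply: Qexp_ext IH => K n _; rewrite big_cons Pi.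
Qed.

Lemma hockey n j : \sum_(k < n) 'C(k, j) = 'C(n, j.+1).
Proof. by elim: n => [|n IH]; rewrite ?big_ord0 ?bin0n // big_ord_recr /= IH binS. Qed.

Lemma Qexp_sum N G : Qexp N G -> Qexp N.+1 (fun K n => \sum_(k < n) G K k).
Proof.
move=> [a ha]; exists (fun j => if j is j'.+1 then a j' else 0) => K n nK.
rewrite big_ord_recl /= mul0n add0n.
transitivity (\sum_(k < n) \sum_(j < N) a j * 'C(k, j)).
  by apply: eq_bigr => k _; rewrite ha //; exact: leq_trans (ltnW (ltn_ord k)) nK.
rewrite exchange_big /=; apply: eq_bigr => j _.
by rewrite -big_distrr /= hockey.
Qed.

Lemma cnt_unroll (T : finType) (A : {set T}) (R : rel T) K n : n <= K ->
  cnt K A R (@rel0 T) n = (A == set0) + \sum_(k < n) \sum_(U | upclosed A R U && (U != set0))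
     cnt K (A :\: U) R (@rel0 T) k.
Proof.
elim: n => [|n IH] nK; first by rewrite cnt0 big_ord0 addn0.
rewrite cnt_rec // big_ord_recr /= addnA -IH ?(ltnW nK) //.
have u0 : upclosed A R set0.
  by apply/andP; split; [apply: sub0set | apply/forall_inP=> u; rewrite inE].
rewrite (bigD1 set0) //= setD0; congr (_ + _).
Qed.

Lemma lemmaA (T : finType) (R : rel T) m : forall A : {set T}, #|A| <= m ->
  Qexp #|A|.+1 (fun K n => cnt K A R (@rel0 T) n).
Proof.
elim: m => [|m IH] A Am;
  (apply: (Qexp_ext (G2 := fun K n => (A == set0) + \sum_(k < n)
      \sum_(U | upclosed A R U && (U != set0)) cnt K (A :\: U) R (@rel0 T) k));
     first by move=> K n nK; rewrite cnt_unroll);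
  (apply: Qexp_add; first by apply: Qexp_mono (Qexp_const (A == set0)));
  apply: (Qexp_sum (G := fun K k => \sum_(U | upclosed A R U && (U != set0)) cnt K (A :\: U) R (@rel0 T) k));
  apply: Qexp_bigsum => U /andP[/andP[UA _] U0];
  (have lt : #|A :\: U| < #|A|;
    first by rewrite -(cardsID U A) (setIidPr UA); move: U0; rewrite -card_gt0; lia).
  lia.
apply: Qexp_mono (IH _ _); lia.
Qed.


Local Open Scope ring_scope.

Definition Pgood (B : nat) (F : nat -> nat -> nat) : Prop :=
  exists f : {poly rat}, goodp B f /\ forall K n, (n <= K)%N -> (F K n)%:R = f.[n%:R].

Lemma Pgood_mono B B' F : (B <= B')%N -> Pgood B F -> Pgood B' F.
Proof. by move=> hB [f [hf e]]; exists f; split=> //; apply: goodp_mono hf. Qed.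

Lemma Qexp_Pgood N F : Qexp N.+1 F -> Pgood N F.
Proof.
move=> [a ha]; exists (\sum_(j < N.+1) ((a j)%:R)%:P * binp j); split.
  apply: goodp_sum => j _; apply: goodpM; first exact: goodp_natC.
  by apply: goodp_mono (goodp_binp j); rewrite -ltnS.
move=> K n nK; rewrite ha // horner_sum natr_sum; apply: eq_bigr => j _.
by rewrite hornerM hornerC binpE natrM.
Qed.

Lemma cnt_prod (T : finType) K (A1 A2 : {set T}) (R : rel T) n :
  [disjoint A1 & A2] ->
  (forall x y, x \in A1 -> y \in A2 -> ~~ R x y && ~~ R y x) ->
  cnt K (A1 :|: A2) R (@rel0 T) n = (cnt K A1 R (@rel0 T) n * cnt K A2 R (@rel0 T) n)%N.
Proof.
move=> dis hR.
have d12 x : x \in A1 -> x \in A2 -> False.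
  by move=> h1 h2; move/disjointFr: dis => /(_ x h1); rewrite h2.
rewrite /cnt -cardsX.
pose restr (B : {set T}) (phi : {ffun T -> 'I_K.+1}) : {ffun T -> 'I_K.+1} :=
  [ffun z => if z \in B then phi z else ord0].
pose G (p : {ffun T -> 'I_K.+1} * {ffun T -> 'I_K.+1}) : {ffun T -> 'I_K.+1} :=
  [ffun z => if z \in A1 then p.1 z else p.2 z].
apply: (card_bij (F := fun phi => (restr A1 phi, restr A2 phi)) (G := G)).
- move=> phi; rewrite !inE => /validP[h1 h2 h3 h4].
  apply/andP; split; apply/validP; split=> //.
  + by move=> x xA; rewrite ffunE xA; apply: h1; rewrite inE xA.
  + by move=> x xA; rewrite ffunE (negbTE xA).
  + by move=> x y xA yA Rxy; rewrite !ffunE xA yA; apply: h3; rewrite ?inE ?xA ?yA.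
  + by move=> x xA; rewrite ffunE xA; apply: h1; rewrite inE xA orbT.
  + by move=> x xA; rewrite ffunE (negbTE xA).
  + by move=> x y xA yA Rxy; rewrite !ffunE xA yA; apply: h3; rewrite ?inE ?xA ?yA ?orbT.
- move=> [p1 p2]; rewrite !inE /= => /andP[/validP[h1 h2 h3 h4] /validP[k1 k2 k3 k4]].
  apply/validP; split=> //.
  + move=> x; rewrite inE ffunE; case: ifP => [xA|xA] /=; first by move=> _; apply: h1.
    by apply: k1.
  + move=> x; rewrite inE ffunE negb_or => /andP[x1 x2]; rewrite (negbTE x1); exact: k2.
  + move=> x y; rewrite !inE !ffunE.
    case x1: (x \in A1); case y1: (y \in A1) => /= hx hy Rxy.
    * exact: h3.
    * by have := hR x y x1 hy; rewrite Rxy.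
    * by have := hR y x y1 hx; rewrite Rxy andbF.
    * exact: k3.
- move=> phi; rewrite !inE => /validP[h1 h2 h3 h4]; apply/ffunP=> z; rewrite !ffunE /=.
  case z1: (z \in A1) => //; case z2: (z \in A2) => //.
  by rewrite h2 // inE z1 z2.
- move=> [p1 p2]; rewrite !inE /= => /andP[/validP[h1 h2 h3 h4] /validP[k1 k2 k3 k4]].
  congr (_, _); apply/ffunP=> z; rewrite !ffunE /=.
    by case z1: (z \in A1) => //; rewrite h2 // z1.
  case z2: (z \in A2); last by rewrite k2 // z2.
  case z1: (z \in A1) => //; exfalso; exact: d12 z1 z2.
Qed.


Lemma PgoodM B1 B2 F1 F2 : Pgood B1 F1 -> Pgood B2 F2 ->
  Pgood (maxn B1 B2) (fun K n => (F1 K n * F2 K n)%N).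
Proof.
move=> [f1 [g1 e1]] [f2 [g2 e2]]; exists (f1 * f2); split.
  by apply: goodpM; [apply: goodp_mono g1; apply: leq_maxl|apply: goodp_mono g2; apply: leq_maxr].
by move=> K n nK; rewrite natrM hornerM e1 // e2.
Qed.

Lemma Pgood_ext B F1 F2 : (forall K n, (n <= K)%N -> F1 K n = F2 K n) -> Pgood B F2 -> Pgood B F1.
Proof. by move=> e [f [hf ef]]; exists f; split=> // K n nK; rewrite e // ef. Qed.

Lemma base_lemma (T L : finType) (g : T -> L) (R : rel T) m : forall A : {set T}, (#|A| <= m)%N ->
  (forall x y, x \in A -> y \in A -> R x y -> g x = g y) ->
  Pgood (#|A| - #|g @: A| + 1) (fun K n => cnt K A R (@rel0 T) n).
Proof.
elim: m => [|m IH] A Am hg.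
  apply: Pgood_mono (Qexp_Pgood (lemmaA R (leqnn _))); lia.
case: (set_0Vmem A) => [A0|[a aA]].
  apply: Pgood_mono (Qexp_Pgood (lemmaA R (leqnn _))); rewrite A0 cards0; lia.
set F := [set z in A | g z == g a].
set A2 := A :\: F.
have FA : F \subset A by apply/subsetP=> z; rewrite inE => /andP[].
have eA : A = F :|: A2.
  by apply/setP=> z; rewrite /A2 /F !inE; case: (z \in A); case: (g z == g a).
have dis : [disjoint F & A2].
  by rewrite -setI_eq0; apply/eqP/setP=> z; rewrite /A2 !inE; case: (z \in A); case: (g z == g a).
have cA : #|A| = (#|F| + #|A2|)%N by rewrite -(cardsID F A) (setIidPr FA).
have aF : a \in F by rewrite inE aA eqxx.
have F1 : (1 <= #|F|)%N by rewrite card_gt0; apply/set0Pn; exists a.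
have gA : g @: A = g a |: g @: A2.
  apply/setP=> y; rewrite !inE; apply/imsetP/orP.
    move=> [z zA ->]; case: (boolP (z \in F)) => zF.
      by left; move: zF; rewrite inE => /andP[_].
    by right; apply: imset_f; rewrite inE zF.
  case=> [/eqP ->|/imsetP[z]]; first by exists a.
  by rewrite inE => /andP[_ zA] ->; exists z.
have gaA2 : g a \notin g @: A2.
  apply/imsetP=> [[z]]; rewrite !inE => /andP[zF zA] e.
  by move: zF; rewrite zA e eqxx.
have cgA : #|g @: A| = (#|g @: A2|).+1 by rewrite gA cardsU1 gaA2.
have le2 : (#|g @: A2| <= #|A2|)%N by apply: leq_imset_card.
apply: (Pgood_ext (F2 := fun K n => (cnt K F R (@rel0 T) n * cnt K A2 R (@rel0 T) n)%N)).
  move=> K n _; rewrite {1}eA; apply: cnt_prod => // x y xF yA2.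
  move: yA2; rewrite inE => /andP[yF yA]; move: (xF); rewrite inE => /andP[xA /eqP gx].
  apply/andP; split; apply/negP => Rxy.
    by move: yF; rewrite inE yA -(hg x y) // gx eqxx.
  by move: yF; rewrite inE yA (hg y x) // gx eqxx.
apply: Pgood_mono (PgoodM (Qexp_Pgood (lemmaA R (leqnn _))) (IH A2 _ _)).
- rewrite geq_max; apply/andP; split; lia.
- lia.
- move=> x y; rewrite !inE => /andP[_ xA] /andP[_ yA]; exact: hg.
Qed.


Lemma PgoodB B F1 F2 : Pgood B F1 -> Pgood B F2 ->
  (forall K n, (n <= K)%N -> (F2 K n <= F1 K n)%N) ->
  Pgood B (fun K n => (F1 K n - F2 K n)%N).
Proof.
move=> [f1 [g1 e1]] [f2 [g2 e2]] le; exists (f1 - f2); split.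
  by apply: goodpD => //; apply: goodpN.
by move=> K n nK; rewrite natrB ?le // hornerD hornerN e1 // e2.
Qed.

Definition EP (T : finType) (A : {set T}) (E : rel T) :=
  [set p : T * T | [&& p.1 \in A, p.2 \in A & E p.1 p.2]].

Lemma cnt_noE (T : finType) K (A : {set T}) (R E : rel T) n :
  EP A E = set0 -> cnt K A R E n = cnt K A R (@rel0 T) n.
Proof.
move=> h; rewrite /cnt; apply: eq_card => phi; rewrite !inE.
apply/validP/validP => -[h1 h2 h3 h4]; split=> // u v uA vA Euv.
have : (u, v) \in EP A E by rewrite inE /= uA vA Euv.
by rewrite h inE.
Qed.

Lemma cnt_loop (T : finType) K (A : {set T}) (R E : rel T) n x :
  x \in A -> E x x -> cnt K A R E n = 0%N.
Proof.
move=> xA Exx; apply/eqP; rewrite cards_eq0; apply/eqP/setP=> phi; rewrite !inE.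
by apply/negP=> /validP[_ _ _ h4]; have := h4 x x xA xA Exx; rewrite eqxx.
Qed.

Definition sg (T : finType) (x y z : T) := if z == y then x else z.
Definition delE (T : finType) (E : rel T) (x y : T) : rel T :=
  fun u v => E u v && ~~ (((u == x) && (v == y)) || ((u == y) && (v == x))).
Definition img (T : finType) (x y : T) (Q : rel T) : rel T :=
  fun u v => [exists a, exists b, [&& sg x y a == u, sg x y b == v & Q a b]].

Lemma cnt_dc (T : finType) K (A : {set T}) (R E : rel T) n x y :
  x \in A -> y \in A -> x != y -> E x y ->
  (cnt K A R E n + cnt K (A :\ y) (img x y R) (img x y (delE E x y)) n)%N
   = cnt K A R (delE E x y) n.
Proof.
move=> xA yA xy Exy.
have sgA a : a \in A -> sg x y a \in A :\ y.
  by move=> aA; rewrite /sg; case: eqP => [_|/eqP ay]; rewrite !inE ?xy ?xA ?ay ?aA.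
have sgA' a : sg x y a \in A :\ y -> a \in A.
  by rewrite /sg; case: eqP => [->|_]; rewrite !inE => /andP[].
have sgy a : sg x y a != y by rewrite /sg; case: ifP => [_|/negbT].
set S' := [set phi : {ffun T -> 'I_K.+1} | validK A R (delE E x y) n phi].
set P := [set phi : {ffun T -> 'I_K.+1} | phi x == phi y].
rewrite /cnt -/S' -(cardsID P S') [RHS]addnC; congr (_ + _)%N.
  apply: eq_card => phi; rewrite !inE; apply/validP/andP.
    move=> [h1 h2 h3 h4]; split; first exact: h4 _ _ xA yA Exy.
    by apply/validP; split=> // u v uA vA /andP[Euv _]; apply: h4.
  move=> [nxy /validP[h1 h2 h3 h4]]; split=> // u v uA vA Euv.
  case: (boolP (((u == x) && (v == y)) || ((u == y) && (v == x)))) => [hxy|hn].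
    by move: nxy; rewrite ?inE; case/orP: hxy => /andP[/eqP-> /eqP->]; rewrite 1?eq_sym.
  by apply: h4 => //; rewrite /delE Euv hn.
pose F (phi : {ffun T -> 'I_K.+1}) : {ffun T -> 'I_K.+1} := [ffun z => if z == y then ord0 else phi z].
pose G (psi : {ffun T -> 'I_K.+1}) : {ffun T -> 'I_K.+1} := [ffun z => psi (sg x y z)].
symmetry; apply: (card_bij (F := F) (G := G)).
- move=> phi; rewrite !inE => /andP[/validP[h1 h2 h3 h4] /eqP pxy].
  have ps a : phi (sg x y a) = phi a by rewrite /sg; case: eqP => [->|].
  apply/validP; split.
  + by move=> z; rewrite !inE ffunE => /andP[/negbTE -> zA]; apply: h1.
  + move=> z; rewrite !inE ffunE negb_and negbK; case: eqP => //= _; exact: h2.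
  + move=> u v uA' vA' /existsP[a /existsP[b /and3P[/eqP au /eqP bv Rab]]].
    move: uA' vA'; rewrite -au -bv => uA' vA'; rewrite !ffunE (negbTE (sgy a)) (negbTE (sgy b)) !ps.
    by apply: h3 => //; apply: sgA'.
  + move=> u v uA' vA' /existsP[a /existsP[b /and3P[/eqP au /eqP bv Eab]]].
    move: uA' vA'; rewrite -au -bv => uA' vA'; rewrite !ffunE (negbTE (sgy a)) (negbTE (sgy b)) !ps.
    by apply: h4 => //; apply: sgA'.
- move=> psi; rewrite !inE => /validP[h1 h2 h3 h4]; apply/andP; split;
    last by rewrite !ffunE /sg eqxx (negbTE xy).
  apply/validP; split.
  + by move=> z zA; rewrite ffunE; apply/h1/sgA.
  + move=> z zA; rewrite ffunE /sg; case: eqP => [zy|_]; first by move: zA; rewrite zy yA.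
    by apply: h2; rewrite !inE negb_and zA orbT.
  + move=> u v uA vA Ruv; rewrite !ffunE; apply: h3; try exact: sgA.
    by apply/existsP; exists u; apply/existsP; exists v; rewrite !eqxx Ruv.
  + move=> u v uA vA Euv; rewrite !ffunE; apply: h4; try exact: sgA.
    by apply/existsP; exists u; apply/existsP; exists v; rewrite !eqxx Euv.
- move=> phi; rewrite !inE => /andP[_ /eqP pxy]; apply/ffunP=> z; rewrite !ffunE (negbTE (sgy z)).
  by rewrite /sg; case: eqP => [->|].
- move=> psi; rewrite !inE => /validP[h1 h2 h3 h4]; apply/ffunP=> z; rewrite !ffunE.
  case: eqP => [->|/eqP zy]; first by rewrite h2 // !inE eqxx.
  by rewrite /sg (negbTE zy).
Qed.


Local Close Scope ring_scope.

Lemma Pgood0 B : Pgood B (fun _ _ => 0%N).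
Proof.
exists 0%R; split; first by move=> i; rewrite coef0; exact: (goodq_int B 0).
by move=> K n _; rewrite horner0.
Qed.

Lemma sg_mem (T : finType) (A : {set T}) x y a : x \in A -> y \in A ->
  sg x y a \in A :\ y -> a \in A.
Proof. by move=> xA yA; rewrite /sg; case: eqP => [->|_]; rewrite !inE => /andP[]. Qed.

Lemma main_lemma (T L : finType) m : forall (A : {set T}) (R E : rel T) (g : T -> L),
  #|A| <= m -> (forall x y, x \in A -> y \in A -> R x y -> g x = g y) ->
  Pgood (#|A| - #|g @: A| + 1) (fun K n => cnt K A R E n).
Proof.
elim: m => [|m IHm] A R E g Am hg.
  have A0 : A = set0 by apply/eqP; rewrite -cards_eq0; lia.
  apply: Pgood_ext; first by move=> K n _; apply: cnt_noE; apply/setP=> p; rewrite !inE A0 inE.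
  exact: base_lemma (leqnn _) hg.
suff: forall k E, #|EP A E| <= k -> Pgood (#|A| - #|g @: A| + 1) (fun K n => cnt K A R E n).
  by apply.
elim=> [|k IHk] {}E hk.
  apply: Pgood_ext; first by move=> K n _; apply: cnt_noE; apply/eqP; rewrite -cards_eq0; lia.
  exact: base_lemma (leqnn _) hg.
case: (set_0Vmem (EP A E)) => [E0|[[x y]]].
  by apply: Pgood_ext; [move=> K n _; apply: cnt_noE | exact: base_lemma (leqnn _) hg].
rewrite inE /= => /and3P[xA yA Exy].
case: (eqVneq x y) => [exy|xy].
  apply: Pgood_ext (Pgood0 _) => K n _; apply: cnt_loop xA _; by rewrite {2}exy.
pose g' z := if g z == g y then g x else g z.
have g'sg a : g' (sg x y a) = g' a.
  by rewrite /g' /sg; case: (a =P y) => [->|//]; rewrite !eqxx; case: ifP.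
apply: (Pgood_ext (F2 := fun K n => cnt K A R (delE E x y) n -
    cnt K (A :\ y) (img x y R) (img x y (delE E x y)) n)).
  by move=> K n _; rewrite -(cnt_dc K R n xA yA xy Exy) addnK.
apply: PgoodB; last by move=> K n _; rewrite -(cnt_dc K R n xA yA xy Exy) leq_addl.
  apply: IHk; rewrite -ltnS; apply: leq_trans hk; apply: proper_card.
  apply/properP; split.
    by apply/subsetP=> -[u v]; rewrite !inE /= => /and3P[-> -> /andP[]].
  by exists (x, y); rewrite !inE /= ?xA ?yA ?Exy // /delE !eqxx /= andbF.
have c1 : #|A| = (#|A :\ y|).+1 by rewrite (cardsD1 y A) yA.
have c2 : #|g @: A| <= (#|g' @: (A :\ y)|).+1.
  apply: leq_trans (_ : #|g y |: (g' @: (A :\ y))| <= _); last by rewrite cardsU1; case: (_ \notin _).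
  apply: subset_leq_card; apply/subsetP=> l /imsetP[z zA ->]; rewrite !inE.
  case: (boolP (g z == g y)) => [/eqP -> //|gzy]; apply/orP; right.
  have -> : g z = g' z by rewrite /g' (negbTE gzy).
  apply: imset_f; rewrite !inE zA andbT; apply: contraNneq gzy => ->; exact: eqxx.
have c3 : #|g' @: (A :\ y)| <= #|A :\ y| by apply: leq_imset_card.
have c4 : #|g @: A| <= #|A| by apply: leq_imset_card.
apply: Pgood_mono (IHm (A :\ y) _ _ g' _ _); first lia.
  lia.
move=> u v uA vA /existsP[a /existsP[b /and3P[/eqP au /eqP bv Rab]]].
rewrite -au -bv !g'sg /g' (hg a b) //.
  by apply: sg_mem xA yA _; rewrite au.
by apply: sg_mem xA yA _; rewrite bv.
Qed.


Lemma le_connect (T : finType) (le : rel T) (hle : is_partial_order le) k :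
  forall x y, #|[set z | le x z && le z y]| <= k -> le x y -> connect (hasse le) x y.
Proof.
have [rf an tr] := hle.
elim: k => [|k IH] x y hk lxy.
  suff : 0 < #|[set z | le x z && le z y]| by lia.
  by rewrite card_gt0; apply/set0Pn; exists x; rewrite inE rf lxy.
case: (eqVneq x y) => [->|xy]; first exact: connect0.
case hc: (covers le x y); first by apply: connect1; rewrite /hasse hc.
move: hc; rewrite /covers lxy xy /= => /negbFE /existsP [z /and4P[zx zy lxz lzy]].
apply: connect_trans (IH x z _ lxz) (IH z y _ lzy).
  rewrite -ltnS; apply: leq_trans hk; apply: proper_card; apply/properP; split.
    apply/subsetP=> w; rewrite !inE => /andP[-> lwz] /=; exact: tr lwz lzy.
  exists y; first by rewrite inE lxy rf.
  rewrite inE lxy /=; apply/negP=> lyz; move: zy; rewrite (an z y) ?eqxx //.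
  by rewrite lzy lyz.
rewrite -ltnS; apply: leq_trans hk; apply: proper_card; apply/properP; split.
  apply/subsetP=> w; rewrite !inE => /andP[lzw ->]; rewrite andbT; exact: tr lxz lzw.
exists x; first by rewrite inE lxy rf.
rewrite inE lxy andbT; apply/negP=> lzx; move: zx; rewrite (an z x) ?eqxx //.
by rewrite lzx lxz.
Qed.

Lemma C_cnt (T : finType) (le E : rel T) n :
  C_count le E n = cnt n [set: T] le E n.
Proof.
rewrite /C_count /cnt.
pose F (phi : {ffun T -> 'I_n}) : {ffun T -> 'I_n.+1} := [ffun z => widen_ord (leqnSn n) (phi z)].
rewrite -(card_in_imset (f := F)); last first.
  move=> p q _ _ e; apply/ffunP=> z; apply: val_inj.
  by move: e => /ffunP/(_ z); rewrite /F !ffunE => /(congr1 val).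
apply: eq_card => psi; rewrite !inE; apply/imsetP/validP.
  move=> [phi]; rewrite inE => /andP[/forallP h1 /forallP h2] ->; split.
  - by move=> x _; rewrite ffunE /=.
  - by move=> x; rewrite inE.
  - move=> x y _ _ lxy; rewrite !ffunE /=.
    by have /forallP/(_ y)/implyP := h1 x; apply.
  - move=> x y _ _ Exy; rewrite !ffunE.
    have /forallP/(_ y)/implyP/(_ Exy) := h2 x.
    by apply: contra => /eqP e; apply/eqP/val_inj; have := congr1 val e.
move=> [h1 h2 h3 h4].
have h1' z : psi z < n by apply: h1; rewrite inE.
exists [ffun z => Ordinal (h1' z)].
  rewrite inE; apply/andP; split; apply/forallP=> x; apply/forallP=> y; apply/implyP => h;
    rewrite !ffunE /=.
    by apply: h3; rewrite ?inE.
  by have := h4 x y (in_setT x) (in_setT y) h; apply: contra => /eqP e; apply/eqP/val_inj; have := congr1 val e.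
by apply/ffunP=> z; rewrite !ffunE; apply: val_inj.
Qed.


Local Open Scope ring_scope.

Theorem theorem1p1 (T : finType) (le E : rel T)
  (hle : is_partial_order le) (hE : is_simple_edge_rel E) :
  exists f : {poly rat},
    (forall n : nat, (C_count le E n)%:R = f.[n%:R]) /\
    (forall (i p : nat), prime p -> (p %| `|denq f`_i|)%N ->
       (p <= #|T| - hasse_ncomp le + 1)%N).
Proof.
have hs : symmetric (hasse le) by move=> x y; rewrite /hasse orbC.
have cs : connect_sym (hasse le) := sym_connect_sym hs.
pose g := fingraph.root (hasse le).
have resp : forall x y, x \in [set: T] -> y \in [set: T] -> le x y -> g x = g y.
  move=> x y _ _ lxy; apply/eqP; rewrite /g root_connect //.
  exact: (@le_connect _ _ hle _ x y (leqnn _) lxy).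
have [f [gf ef]] := main_lemma E (leqnn _) resp.
exists f; split.
  by move=> n; rewrite C_cnt ef.
move=> i p pp hp; have := goodq_den (gf i) pp hp.
have -> : #|g @: [set: T]| = hasse_ncomp le.
  rewrite /hasse_ncomp; apply: eq_card => x; rewrite !inE /=; apply/imsetP/idP.
    by move=> [y _ ->]; rewrite andbT; apply: roots_root.
  by move=> /andP[/eqP rx _]; exists x; rewrite ?inE.
by rewrite cardsT.
Qed.
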